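(* Let $f$ be an L-additive arithmetic function with $h_f(n)\neq0$ for all $n\ge1$. Then for every positive integer $n$, $$\Lambda_f(n)=\sum_{d\mid n}\mu\!\left(\frac nd\right)\frac{f(d)}{h_f(d)}=-\sum_{d\mid n}\frac{\mu(d)f(d)}{h_f(d)},$$ i.e. $\Lambda_f=\mu\ast\frac{f}{h_f}=-\,\mathbf 1\ast\frac{\mu f}{h_f}$.
   Context: An arithmetic function $f$ is L-additive if there is a completely multiplicative arithmetic function $h_f$ such that $f(mn)=f(m)h_f(n)+f(n)h_f(m)$ for all positive integers $m,n$. The generalized von Mangoldt function of $f$ is $\Lambda_f(n)=f(p)/h_f(p)$ if $n=p^k$ for some prime $p$ and integer $k\ge1$, and $\Lambda_f(n)=0$ otherwise. $\mu$ is the Möbius function, $\mathbf 1(n)=1$, and the Dirichlet convolution is $(u\ast v)(n)=\sum_{d\mid n}u(d)v(n/d)$; quotients/products of functions are pointwise. *)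

(* Defs.v *)
(* Arithmetic functions take values in an arbitrary field R
   (e.g. the complex numbers); only their values at positive integers matter. *)
From mathcomp Require Import all_boot all_order all_algebra.
Set Implicit Arguments. Unset Strict Implicit. Unset Printing Implicit Defensive.
Import Order.TTheory GRing.Theory Num.Theory.
Local Open Scope ring_scope.

(* Moebius function (mu 0 is irrelevant; set to 0). *)
Definition moebius (R : nzRingType) (n : nat) : R :=
  if (0 < n)%N && all (fun p => logn p n == 1)%N (primes n)
  then (-1) ^+ size (primes n) else 0.

Definition completely_multiplicative (R : nzRingType) (h : nat -> R) : Prop :=
  h 1%N = 1 /\ forall m n : nat, (0 < m)%N -> (0 < n)%N -> h (m * n)%N = h m * h n.

Definition L_additive_wrt (R : nzRingType) (f h : nat -> R) : Prop :=
  completely_multiplicative h /\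
  forall m n : nat, (0 < m)%N -> (0 < n)%N -> f (m * n)%N = f m * h n + f n * h m.

Definition is_prime_power (n : nat) : bool :=
  [exists p : 'I_n.+1, [exists k : 'I_n.+1, prime p && (0 < k)%N && (n == p ^ k)%N]].

(* generalized von Mangoldt function: f(p)/h_f(p) if n = p^k, k>=1, else 0.
   For a prime power n, pdiv n is its unique prime divisor p. *)
Definition gen_vonMangoldt (R : fieldType) (f h : nat -> R) (n : nat) : R :=
  if is_prime_power n then f (pdiv n) / h (pdiv n) else 0.

(* Main.v *)
Require Import Defs.
From mathcomp Require Import all_boot all_order all_algebra.
Import GRing.Theory.

Lemma perm_div_coprime p k m : prime p -> coprime p m -> (0 < m)%N ->
  perm_eq [seq d <- divisors (p ^ k * m) | ~~ (p %| d)] (divisors m).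
Proof.
move=> pp cpm m0.
have n0 : (0 < p ^ k * m)%N by rewrite muln_gt0 expn_gt0 prime_gt0.
apply: uniq_perm; [exact: filter_uniq (divisors_uniq _) | exact: divisors_uniq|].
move=> d; rewrite mem_filter -!dvdn_divisors //.
apply/idP/idP.
  case/andP=> npd dv.
  have cd : coprime d (p ^ k).
    by rewrite coprime_sym coprimeXl // prime_coprime.
  by rewrite -(Gauss_dvdr _ cd).
move=> dm; rewrite dvdn_mull // andbT.
apply/negP=> pd; move: cpm; rewrite prime_coprime // (dvdn_trans pd dm).
by [].
Qed.

Lemma perm_div_mult p n : prime p -> p %| n -> (0 < n)%N ->
  perm_eq [seq d <- divisors n | p %| d] (map (muln p) (divisors (n %/ p))).
Proof.
move=> pp pn n0.
have p0 := prime_gt0 pp.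
have np0 : (0 < n %/ p)%N by rewrite divn_gt0 // dvdn_leq.
apply: uniq_perm; [exact: filter_uniq (divisors_uniq _) | |].
  rewrite map_inj_uniq ?divisors_uniq // => x y /eqP.
  by rewrite eqn_pmul2l // => /eqP.
move=> d; rewrite mem_filter -!dvdn_divisors //.
apply/idP/idP.
  case/andP=> pd dn; apply/mapP; exists (d %/ p).
    by rewrite -dvdn_divisors // dvdn_divLR // divnK.
  by rewrite mulnC divnK.
case/mapP=> e; rewrite -dvdn_divisors // => he ->.
by rewrite dvdn_mulr //= -(divnK pn) (mulnC (n %/ p)) dvdn_pmul2l.
Qed.

Lemma split_div (R : fieldType) (F : nat -> R) p k m :
  prime p -> coprime p m -> (0 < m)%N -> (0 < k)%N ->
  (forall e, F (p * (p * e))%N = 0%R) ->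
  (\sum_(d <- divisors (p ^ k * m)) F d
   = \sum_(e <- divisors m) F e + \sum_(e <- divisors m) F (p * e)%N)%R.
Proof.
move=> pp cpm m0 k0 F0.
have p0 := prime_gt0 pp.
have n0 : (0 < p ^ k * m)%N by rewrite muln_gt0 expn_gt0 p0.
rewrite (bigID (fun d => p %| d)) /= GRing.addrC.
rewrite -[X in (X + _)%R]big_filter -[X in (_ + X)%R]big_filter.
rewrite (perm_big _ (perm_div_coprime _ _ _ pp cpm m0)).
have pn : p %| p ^ k * m by rewrite dvdn_mulr // dvdn_exp.
rewrite (perm_big _ (perm_div_mult _ _ pp pn n0)) big_map.
congr (_ + _)%R.
case: k k0 n0 pn => // k _ _ _.
rewrite expnS -mulnA mulKn //.
rewrite (bigID (fun d => p %| d)) /= big1 ?GRing.add0r.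
  by rewrite -big_filter (perm_big _ (perm_div_coprime _ _ _ pp cpm m0)).
by move=> e /divnK <-; rewrite (mulnC _ p) F0.
Qed.

Lemma mu1 (R : fieldType) : moebius R 1 = 1%R.
Proof. by rewrite /moebius. Qed.

Lemma mu_pe (R : fieldType) p e : prime p -> (0 < e)%N -> coprime p e ->
  moebius R (p * e) = (- moebius R e)%R.
Proof.
move=> pp e0 cpe.
have p0 := prime_gt0 pp.
have npe : p \notin primes e by rewrite mem_primes pp e0 -prime_coprime.
have perm : perm_eq (primes (p * e)) (p :: primes e).
  apply: uniq_perm; rewrite ?primes_uniq //= ?npe ?primes_uniq //.
  by move=> q; rewrite primesM // primes_prime // !in_cons in_nil orbF.
have lp : logn p (p * e) = 1 by rewrite lognM // logn_prime // eqxx logn_coprime.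
rewrite /moebius; rewrite muln_gt0 p0 e0 (perm_size perm) (perm_all _ perm) /= lp eqxx /=.
have -> : all (fun q => logn q (p * e) == 1) (primes e) = all (fun q => logn q e == 1) (primes e).
  apply: eq_in_all => q qe; rewrite lognM // logn_prime //.
  have -> : (q == p) = false by apply/eqP => qp; rewrite -qp qe in npe.
  by [].
by case: ifP => _; rewrite ?GRing.oppr0 // GRing.exprS GRing.mulN1r.
Qed.

Lemma mu_ppe (R : fieldType) p e : prime p -> moebius R (p * (p * e)) = 0%R.
Proof.
move=> pp; have p0 := prime_gt0 pp.
case: (posnP e) => [-> | e0]; first by rewrite !muln0.
rewrite /moebius; case: ifP => // /andP[_ /allP H].
have pin : p \in primes (p * (p * e)) by rewrite mem_primes pp !muln_gt0 p0 e0 dvdn_mulr.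
move: (H p pin); rewrite !lognM ?muln_gt0 ?p0 // logn_prime // eqxx.
by [].
Qed.

Lemma div1 : divisors 1 = [:: 1].
Proof. by vm_compute. Qed.

Lemma ipp1 : is_prime_power 1 = false.
Proof.
apply/negbTE/existsP => -[p /existsP [k /andP[/andP[pp k0] /eqP E]]].
have := ltn_expl k (prime_gt1 pp); rewrite -E.
by case: (nat_of_ord k) k0 => [|[]].
Qed.

Lemma decomp n : (1 < n)%N -> exists m,
  [/\ prime (pdiv n), coprime (pdiv n) m, (0 < m)%N, (0 < logn (pdiv n) n)%N
   & n = pdiv n ^ logn (pdiv n) n * m].
Proof.
move=> n1; have n0 : (0 < n)%N by apply: ltnW.
have pp := pdiv_prime n1.
have [m cpm En] := pfactor_coprime pp n0.
exists m; split => //.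
  by move: n0; rewrite {1}En muln_gt0 => /andP[].
  by rewrite logn_gt0 mem_primes pp n0 pdiv_dvd.
by rewrite mulnC.
Qed.

Lemma sum_mu (R : fieldType) n : (0 < n)%N ->
  (\sum_(d <- divisors n) moebius R d = (n == 1%N)%:R)%R.
Proof.
move=> n0; case: (ltngtP n 1) => [|n1|->]; first by rewrite ltnNge n0.
  have [m [pp cpm m0 k0 En]] := decomp _ n1.
  rewrite {1}En split_div //; last by move=> e; rewrite mu_ppe.
  rewrite big_seq [X in (_ + X)%R]big_seq.
  rewrite -big_split /= big1 // => e; rewrite -dvdn_divisors // => em.
  rewrite mu_pe ?GRing.subrr //; first exact: dvdn_gt0 em.
  exact: coprime_dvdr cpm.
by rewrite div1 big_seq1 mu1.
Qed.

Lemma sum_div_rev (R : fieldType) (F : nat -> R) n : (0 < n)%N ->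
  (\sum_(d <- divisors n) F d = \sum_(d <- divisors n) F (n %/ d)%N)%R.
Proof.
move=> n0.
have K : forall d, d %| n -> n %/ (n %/ d) = d.
  move=> d dn; have d0 := dvdn_gt0 n0 dn.
  have := divnK dn; set q := n %/ d => E.
  have q0 : (0 < q)%N by rewrite divn_gt0 // dvdn_leq.
  by rewrite -{1}E mulKn.
rewrite -(big_map (fun d => n %/ d) xpredT F); apply: perm_big.
apply: uniq_perm; rewrite ?divisors_uniq //.
  rewrite map_inj_in_uniq ?divisors_uniq // => x y.
  rewrite -!dvdn_divisors // => xn yn E.
  by rewrite -(K _ xn) E K.
move=> x; apply/idP/idP; rewrite -?dvdn_divisors //.
  move=> xn; apply/mapP; exists (n %/ x); first by rewrite -dvdn_divisors // dvdn_div.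
  by rewrite K.
by case/mapP => d; rewrite -dvdn_divisors // => dn ->; rewrite dvdn_div.
Qed.

Lemma divnKK n d : (0 < n)%N -> d %| n -> n %/ (n %/ d) = d.
Proof.
move=> n0 dn; have d0 := dvdn_gt0 n0 dn.
have := divnK dn; set q := n %/ d => E.
have q0 : (0 < q)%N by rewrite divn_gt0 // dvdn_leq.
by rewrite -{1}E mulKn.
Qed.

From mathcomp Require Import ring.
Local Open Scope ring_scope.

Theorem theorem3p2 (R : fieldType) (f h : nat -> R) :
  L_additive_wrt f h ->
  (forall n : nat, (0 < n)%N -> h n != 0) ->
  forall n : nat, (0 < n)%N ->
    gen_vonMangoldt f h n
      = \sum_(d <- divisors n) moebius R (n %/ d)%N * (f d / h d)
    /\ gen_vonMangoldt f h n
      = - \sum_(d <- divisors n) moebius R d * f d / h d.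
Proof.
move=> [[h1 hM] fM] hnz n n0.
pose g d := f d / h d.
have gM : forall a b, (0 < a)%N -> (0 < b)%N -> g (a * b)%N = g a + g b.
  move=> a b a0 b0; rewrite /g fM // hM //.
  have ha := hnz _ a0; have hb := hnz _ b0.
  by field; rewrite ha hb.
have g1 : g 1%N = 0.
  by apply/eqP; rewrite -(addrI (g 1%N) (_ : g 1%N + g 1%N = g 1%N + 0)) ?eqxx // addr0 -gM.
set S2 := \sum_(d <- divisors n) moebius R d * g d.
have key : gen_vonMangoldt f h n = - S2.
  case: (ltngtP n 1) => [|n1|En1]; first by rewrite ltnNge n0.
    have [m [pp cpm m0 k0 En]] := decomp _ n1.
    set p := pdiv n in pp cpm k0 En *; set k := logn p n in k0 En *.
    have p0 := prime_gt0 pp.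
    have S2E : S2 = - (g p * (m == 1%N)%:R).
      rewrite /S2 {1}En split_div //; last by move=> e /=; rewrite mu_ppe // mul0r.
      rewrite big_seq [X in _ + X]big_seq -big_split /=.
      rewrite (eq_bigr (fun e => - (g p * moebius R e))); last first.
        move=> e; rewrite -dvdn_divisors // => em; have e0 := dvdn_gt0 m0 em.
        rewrite mu_pe ?(coprime_dvdr em cpm) // gM //; ring.
      by rewrite -big_seq sumrN -mulr_sumr sum_mu.
    have ipp : is_prime_power n = (m == 1%N).
      apply/idP/eqP.
        case/existsP => -[q _] /existsP [[j _] /= /andP[/andP[qp j0] /eqP Eq]].
        have pq : p = q by rewrite /p Eq -(prednK j0) pdiv_pfactor.
        have kj : k = j by rewrite /k pq Eq pfactorK.
        move/eqP: En; rewrite {1}Eq pq kj -{1}(muln1 (q ^ j)%N) eqn_pmul2l ?expn_gt0 ?prime_gt0 //.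
        by rewrite eq_sym => /eqP.
      move=> m1; move: En; rewrite m1 muln1 => En.
      have pn : (p < n.+1)%N by rewrite ltnS dvdn_leq // pdiv_dvd.
      have kn : (k < n.+1)%N.
        by rewrite ltnS [X in (_ <= X)%N]En ltnW // ltn_expl // prime_gt1.
      apply/existsP; exists (Ordinal pn); apply/existsP; exists (Ordinal kn).
      by rewrite /= pp k0 /= {1}En.
    rewrite S2E opprK /gen_vonMangoldt ipp -/p.
    by case: eqP => _; rewrite ?mulr1 ?mulr0.
  by rewrite /gen_vonMangoldt /S2 En1 ipp1 div1 big_seq1 g1 mulr0 oppr0.
have E2 : \sum_(d <- divisors n) moebius R d * f d / h d = S2.
  by apply: eq_bigr => d _; rewrite -mulrA.
split; last by rewrite E2.
rewrite key (sum_div_rev _ _ _ n0) big_seq.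
rewrite (eq_bigr (fun d => moebius R d * g n - moebius R d * g d)); last first.
  move=> d; rewrite -dvdn_divisors // => dn; rewrite divnKK //.
  have d0 := dvdn_gt0 n0 dn.
  have q0 : (0 < n %/ d)%N by rewrite divn_gt0 // dvdn_leq.
  have -> : g n = g d + g (n %/ d)%N by rewrite -gM // mulnC divnK.
  by rewrite mulrDr addrAC subrr add0r.
rewrite -big_seq sumrB -mulr_suml sum_mu //.
by rewrite /S2; case: eqP => [->|_]; rewrite ?g1 ?mulr0 ?mul0r add0r.
Qed.
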